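(* Let $\lambda\ge0$. If a solution $(\xi,L_1,L_2,L_3,R_1,R_2,R_3)$ of the system $(S_\lambda)$ is defined on $[T,S)$ with $S<\infty$ and cannot be extended past $S$, then $\lim_{r\to S}\xi(r)=-\infty$.
   Context: The system $(S_\lambda)$ is: $\xi'=-L_1^2-L_2^2-L_3^2-\lambda$, $L_i'=-\xi L_i+\frac{R_i^2}{2}-\frac{(R_j-R_k)^2}{2}-\lambda$, $R_i'=R_i(L_i-L_j-L_k)$ for $i=1,2,3$, $\{i,j,k\}=\{1,2,3\}$, where $'$ denotes $d/dr$. *)

(* Defs.v *)
From Stdlib Require Import Reals.
From Coquelicot Require Import Coquelicot.
Open Scope R_scope.

Definition rhs_xi (lam l1 l2 l3 : R) : R := - l1 ^ 2 - l2 ^ 2 - l3 ^ 2 - lam.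
Definition rhs_L (lam x li ri rj rk : R) : R :=
  - x * li + ri ^ 2 / 2 - (rj - rk) ^ 2 / 2 - lam.
Definition rhs_R (ri li lj lk : R) : R := ri * (li - lj - lk).

Definition is_solution_on (lam T S : R)
    (xi L1 L2 L3 R1 R2 R3 : R -> R) : Prop :=
  (forall r, T < r < S ->
     derivable_pt_lim xi r (rhs_xi lam (L1 r) (L2 r) (L3 r)) /\
     derivable_pt_lim L1 r (rhs_L lam (xi r) (L1 r) (R1 r) (R2 r) (R3 r)) /\
     derivable_pt_lim L2 r (rhs_L lam (xi r) (L2 r) (R2 r) (R3 r) (R1 r)) /\
     derivable_pt_lim L3 r (rhs_L lam (xi r) (L3 r) (R3 r) (R1 r) (R2 r)) /\
     derivable_pt_lim R1 r (rhs_R (R1 r) (L1 r) (L2 r) (L3 r)) /\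
     derivable_pt_lim R2 r (rhs_R (R2 r) (L2 r) (L3 r) (L1 r)) /\
     derivable_pt_lim R3 r (rhs_R (R3 r) (L3 r) (L1 r) (L2 r))) /\
  filterlim xi (at_right T) (locally (xi T)) /\
  filterlim L1 (at_right T) (locally (L1 T)) /\
  filterlim L2 (at_right T) (locally (L2 T)) /\
  filterlim L3 (at_right T) (locally (L3 T)) /\
  filterlim R1 (at_right T) (locally (R1 T)) /\
  filterlim R2 (at_right T) (locally (R2 T)) /\
  filterlim R3 (at_right T) (locally (R3 T)).

Definition not_extendable (lam T S : R)
    (xi L1 L2 L3 R1 R2 R3 : R -> R) : Prop :=
  ~ exists (S' : R) (xi' L1' L2' L3' R1' R2' R3' : R -> R),
      S < S' /\
      is_solution_on lam T S' xi' L1' L2' L3' R1' R2' R3' /\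
      (forall r, T <= r < S ->
         xi' r = xi r /\ L1' r = L1 r /\ L2' r = L2 r /\ L3' r = L3 r /\
         R1' r = R1 r /\ R2' r = R2 r /\ R3' r = R3 r).

(* Main.v *)
Require Import Defs.
From Stdlib Require Import Reals Lra Psatz Classical.
From Coquelicot Require Import Coquelicot.
Open Scope R_scope.

Lemma nonincr (f d : R -> R) a b :
 (forall r, a < r < b -> derivable_pt_lim f r (d r) /\ d r <= 0) ->
 forall x y, a < x -> x <= y -> y < b -> f y <= f x.
Proof.
 intros H x y Hx Hxy Hy.
 destruct (MVT_gen f x y d) as [c [Hc Heq]].
 - intros z Hz. rewrite Rmin_left in Hz by lra; rewrite Rmax_right in Hz by lra.
   apply is_derive_Reals. apply H; lra.
 - intros z Hz. rewrite Rmin_left in Hz by lra; rewrite Rmax_right in Hz by lra.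
   apply derivable_continuous_pt. exists (d z). apply H; lra.
 - rewrite Rmin_left in Hc by lra; rewrite Rmax_right in Hc by lra.
   assert (d c <= 0) by (apply H; lra). nra.
Qed.

Lemma fexp_deriv f g r df dg :
  derivable_pt_lim f r df -> derivable_pt_lim g r dg ->
  derivable_pt_lim (fun t => f t * exp (g t)) r ((df + f r * dg) * exp (g r)).
Proof.
 intros Hf Hg. apply is_derive_Reals in Hf. apply is_derive_Reals in Hg.
 apply is_derive_Reals.
 pose proof (is_derive_mult f (fun t => exp (g t)) r df (dg * exp (g r)) Hf
   (is_derive_comp exp g r (exp (g r)) dg (is_derive_exp _) Hg) Rmult_comm) as H.
 replace ((df + f r * dg) * exp (g r)) with
   (plus (mult df (exp (g r))) (mult (f r) (dg * exp (g r)))).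
 exact H.
 unfold plus, mult; simpl. ring.
Qed.

Lemma sq_deriv f r d Q :
  derivable_pt_lim f r d -> derivable_pt_lim (fun t => f t ^ 2 + Q) r (2 * f r * d).
Proof.
 intros Hf. apply is_derive_Reals in Hf. apply is_derive_Reals.
 pose proof (is_derive_plus _ _ r _ _ (is_derive_pow f 2 r d Hf) (is_derive_const Q r)) as H.
 replace (2 * f r * d) with (plus (INR 2 * d * f r ^ Init.Nat.pred 2) zero).
 exact H.
 unfold plus, zero; simpl. ring.
Qed.

Lemma proddiff a b a' b' Ma Mb :
  Rabs b <= Mb -> Rabs a' <= Ma ->
  Rabs (a * b - a' * b') <= Mb * Rabs (a - a') + Ma * Rabs (b - b').
Proof.
  intros Hb Ha.
  replace (a * b - a' * b') with ((a - a') * b + a' * (b - b')) by ring.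
  eapply Rle_trans; [apply Rabs_triang|].
  rewrite !Rabs_mult.
  assert (0 <= Rabs (a - a')) by apply Rabs_pos.
  assert (0 <= Rabs (b - b')) by apply Rabs_pos.
  assert (0 <= Rabs b) by apply Rabs_pos.
  nra.
Qed.

Lemma abs_le_e x e : Rabs x <= e -> - e <= x <= e.
Proof. intros H. split; [|]; apply Rabs_le_between' in H || idtac;
  unfold Rabs in H; destruct (Rcase_abs x); lra. Qed.

Lemma le_abs x e : - e <= x <= e -> Rabs x <= e.
Proof. intros H. unfold Rabs; destruct (Rcase_abs x); lra. Qed.

Lemma lip_cont (g : R -> R) C :
  (forall a b, Rabs (g a - g b) <= C * Rabs (a - b)) -> forall x, continuous g x.
Proof.
  intros H x. apply filterlim_locally. intros eps.
  assert (HC : 0 <= C).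
  { specialize (H 1 0). assert (0 <= Rabs (g 1 - g 0)) by apply Rabs_pos.
    rewrite Rminus_0_r, Rabs_R1 in H. lra. }
  assert (Hd : 0 < eps / (C + 1)).
  { apply Rdiv_lt_0_compat; [apply cond_pos | lra]. }
  exists (mkposreal _ Hd). intros y Hy. change (Rabs (g y - g x) < eps).
  change (Rabs (y - x) < eps / (C + 1)) in Hy.
  eapply Rle_lt_trans; [apply H|].
  assert (0 < eps) by apply cond_pos.
  apply Rle_lt_trans with ((C+1) * Rabs (y - x)).
  assert (0 <= Rabs (y - x)) by apply Rabs_pos. nra.
  apply Rmult_lt_reg_r with (/ (C+1)). apply Rinv_0_lt_compat; lra.
  replace ((C + 1) * Rabs (y - x) * / (C + 1)) with (Rabs (y - x)) by (field; lra).
  unfold Rdiv in Hy. nra.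
Qed.

Lemma small_zero a C : 0 <= C -> (forall n, a <= C * (1/2)^n) -> a <= 0.
Proof.
  intros HC H. destruct (Rle_dec a 0) as [|Ha]; auto. exfalso.
  assert (Hy : 0 < a / (C + 1)) by (apply Rdiv_lt_0_compat; lra).
  destruct (pow_lt_1_zero (1/2) ltac:(rewrite Rabs_pos_eq; lra) _ Hy) as [N HN].
  specialize (HN N (le_n N)). specialize (H N).
  rewrite Rabs_pos_eq in HN by (apply pow_le; lra).
  assert (C * (1/2)^N <= C * (a / (C+1))) by nra.
  assert (C * (a / (C+1)) < a).
  { apply Rmult_lt_reg_r with (C+1). lra. unfold Rdiv. field_simplify; lra. }
  lra.
Qed.

Lemma plus_minus_l (p q : R) : plus p q - p = q.
Proof. unfold plus; simpl. ring. Qed.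

Lemma int_diff (g : R -> R) B a x y :
  (forall s, continuous g s) -> (forall s, Rabs (g s) <= B) ->
  Rabs (RInt g a x - RInt g a y) <= B * Rabs (x - y).
Proof.
  intros Hc Hb.
  assert (Hex : forall u v, ex_RInt g u v) by (intros; apply (ex_RInt_continuous (V:=R_CompleteNormedModule)); auto).
  rewrite <- (RInt_Chasles g a y x) by auto.
  set (A1 := RInt g a y). set (A2 := RInt g y x).
  assert (E : plus A1 A2 - A1 = A2) by exact (plus_minus_l A1 A2). rewrite E; unfold A1, A2; clear E.
  destruct (Rle_dec y x).
  - rewrite (Rabs_pos_eq (x - y)) by lra.
    eapply Rle_trans. apply abs_RInt_le_const; auto. lra.
  - rewrite <- opp_RInt_swap by auto.
    rewrite Rabs_left1 with (x - y) by lra.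
    change (Rabs (- RInt g x y) <= B * - (x - y)). rewrite Rabs_Ropp.
    eapply Rle_trans. apply abs_RInt_le_const; auto. lra. lra.
Qed.
Definition st := nat -> R.

Definition F (lam : R) (x : st) (i : nat) : R :=
  match i with
  | 0 => rhs_xi lam (x 1%nat) (x 2%nat) (x 3%nat)
  | 1 => rhs_L lam (x 0%nat) (x 1%nat) (x 4%nat) (x 5%nat) (x 6%nat)
  | 2 => rhs_L lam (x 0%nat) (x 2%nat) (x 5%nat) (x 6%nat) (x 4%nat)
  | 3 => rhs_L lam (x 0%nat) (x 3%nat) (x 6%nat) (x 4%nat) (x 5%nat)
  | 4 => rhs_R (x 4%nat) (x 1%nat) (x 2%nat) (x 3%nat)
  | 5 => rhs_R (x 5%nat) (x 2%nat) (x 3%nat) (x 1%nat)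
  | 6 => rhs_R (x 6%nat) (x 3%nat) (x 1%nat) (x 2%nat)
  | _ => 0
  end.

Definition inbox (M : R) (x : st) := forall i, (i < 7)%nat -> Rabs (x i) <= M.

Lemma sq_bnd a M : Rabs a <= M -> a ^ 2 <= M ^ 2.
Proof. intros H. rewrite <- (pow2_abs a). assert (0 <= Rabs a) by apply Rabs_pos. nra. Qed.

Lemma prod_bnd a b Ma Mb : Rabs a <= Ma -> Rabs b <= Mb -> Rabs (a * b) <= Ma * Mb.
Proof. intros. rewrite Rabs_mult. assert (0 <= Rabs a) by apply Rabs_pos.
  assert (0 <= Rabs b) by apply Rabs_pos. nra. Qed.

Lemma abs3 a b c M : Rabs a <= M -> Rabs b <= M -> Rabs c <= M -> Rabs (a - b - c) <= 3 * M.
Proof. intros Ha Hb Hc. apply abs_le_e in Ha, Hb, Hc. apply le_abs. lra. Qed.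

Lemma abs2 a b M : Rabs a <= M -> Rabs b <= M -> Rabs (a - b) <= 2 * M.
Proof. intros Ha Hb. apply abs_le_e in Ha, Hb. apply le_abs. lra. Qed.

Lemma F_bnd lam M x i : 0 <= lam -> 0 <= M -> inbox M x -> (i < 7)%nat ->
  Rabs (F lam x i) <= 4 * M ^ 2 + lam + 1.
Proof.
  intros Hl HM Hx Hi.
  assert (H0 := Hx 0%nat ltac:(lia)). assert (H1 := Hx 1%nat ltac:(lia)).
  assert (H2 := Hx 2%nat ltac:(lia)). assert (H3 := Hx 3%nat ltac:(lia)).
  assert (H4 := Hx 4%nat ltac:(lia)). assert (H5 := Hx 5%nat ltac:(lia)).
  assert (H6 := Hx 6%nat ltac:(lia)).
  assert (Q1 := sq_bnd _ _ H1). assert (Q2 := sq_bnd _ _ H2). assert (Q3 := sq_bnd _ _ H3).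
  assert (Q4 := sq_bnd _ _ H4). assert (Q5 := sq_bnd _ _ H5). assert (Q6 := sq_bnd _ _ H6).
  assert (D56 := sq_bnd _ _ (abs2 _ _ _ H5 H6)).
  assert (D64 := sq_bnd _ _ (abs2 _ _ _ H6 H4)).
  assert (D45 := sq_bnd _ _ (abs2 _ _ _ H4 H5)).
  assert (P01 := abs_le_e _ _ (prod_bnd _ _ _ _ H0 H1)).
  assert (P02 := abs_le_e _ _ (prod_bnd _ _ _ _ H0 H2)).
  assert (P03 := abs_le_e _ _ (prod_bnd _ _ _ _ H0 H3)).
  assert (R4 := abs_le_e _ _ (prod_bnd _ _ _ _ H4 (abs3 _ _ _ _ H1 H2 H3))).
  assert (R5 := abs_le_e _ _ (prod_bnd _ _ _ _ H5 (abs3 _ _ _ _ H2 H3 H1))).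
  assert (R6 := abs_le_e _ _ (prod_bnd _ _ _ _ H6 (abs3 _ _ _ _ H3 H1 H2))).
  assert (0 <= x 1%nat ^ 2) by apply pow2_ge_0. assert (0 <= x 2%nat ^ 2) by apply pow2_ge_0.
  assert (0 <= x 3%nat ^ 2) by apply pow2_ge_0. assert (0 <= x 4%nat ^ 2) by apply pow2_ge_0.
  assert (0 <= x 5%nat ^ 2) by apply pow2_ge_0. assert (0 <= x 6%nat ^ 2) by apply pow2_ge_0.
  assert (0 <= (x 5%nat - x 6%nat) ^ 2) by apply pow2_ge_0. assert (0 <= (x 6%nat - x 4%nat) ^ 2) by apply pow2_ge_0.
  assert (0 <= (x 4%nat - x 5%nat) ^ 2) by apply pow2_ge_0.
  apply le_abs.
  do 7 (destruct i as [|i]; [unfold F, rhs_xi, rhs_L, rhs_R; lra|]). lia.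
Qed.

Lemma sqdiff a b M : Rabs a <= M -> Rabs b <= M -> Rabs (a ^ 2 - b ^ 2) <= 2 * M * Rabs (a - b).
Proof. intros Ha Hb. replace (a ^ 2 - b ^ 2) with (a * a - b * b) by ring.
  eapply Rle_trans. apply (proddiff a a b b M M Ha Hb).
  replace (a - b) with (a - b) by ring. lra. Qed.

Lemma F_lip lam M x y d i : 0 <= M -> inbox M x -> inbox M y ->
  (forall j, (j < 7)%nat -> Rabs (x j - y j) <= d) -> (i < 7)%nat ->
  Rabs (F lam x i - F lam y i) <= (8 * M + 1) * d.
Proof.
  intros HM Hx Hy Hd Hi.
  assert (Hd0 : 0 <= d) by (eapply Rle_trans; [apply Rabs_pos| apply (Hd 0%nat); lia]).
  assert (X0 := Hx 0%nat ltac:(lia)). assert (X1 := Hx 1%nat ltac:(lia)).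
  assert (X2 := Hx 2%nat ltac:(lia)). assert (X3 := Hx 3%nat ltac:(lia)).
  assert (X4 := Hx 4%nat ltac:(lia)). assert (X5 := Hx 5%nat ltac:(lia)).
  assert (X6 := Hx 6%nat ltac:(lia)).
  assert (Y0 := Hy 0%nat ltac:(lia)). assert (Y1 := Hy 1%nat ltac:(lia)).
  assert (Y2 := Hy 2%nat ltac:(lia)). assert (Y3 := Hy 3%nat ltac:(lia)).
  assert (Y4 := Hy 4%nat ltac:(lia)). assert (Y5 := Hy 5%nat ltac:(lia)).
  assert (Y6 := Hy 6%nat ltac:(lia)).
  assert (D0 := Hd 0%nat ltac:(lia)). assert (D1 := Hd 1%nat ltac:(lia)).
  assert (D2 := Hd 2%nat ltac:(lia)). assert (D3 := Hd 3%nat ltac:(lia)).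
  assert (D4 := Hd 4%nat ltac:(lia)). assert (D5 := Hd 5%nat ltac:(lia)).
  assert (D6 := Hd 6%nat ltac:(lia)).
  assert (Md : forall u, Rabs u <= d -> forall c, 0 <= c -> c * Rabs u <= c * d)
    by (intros; apply Rmult_le_compat_l; auto).
  assert (Md' : forall u c k, Rabs u <= k * d -> 0 <= c -> c * Rabs u <= c * k * d)
    by (intros; rewrite Rmult_assoc; apply Rmult_le_compat_l; auto).
  assert (E1 := abs_le_e _ _ (sqdiff _ _ _ X1 Y1)).
  assert (E2 := abs_le_e _ _ (sqdiff _ _ _ X2 Y2)).
  assert (E3 := abs_le_e _ _ (sqdiff _ _ _ X3 Y3)).
  assert (E4 := abs_le_e _ _ (sqdiff _ _ _ X4 Y4)).
  assert (E5 := abs_le_e _ _ (sqdiff _ _ _ X5 Y5)).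
  assert (E6 := abs_le_e _ _ (sqdiff _ _ _ X6 Y6)).
  assert (F1 := Md _ D1 (2 * M) ltac:(lra)). assert (F2 := Md _ D2 (2 * M) ltac:(lra)).
  assert (F3 := Md _ D3 (2 * M) ltac:(lra)). assert (F4 := Md _ D4 (2 * M) ltac:(lra)).
  assert (F5 := Md _ D5 (2 * M) ltac:(lra)). assert (F6 := Md _ D6 (2 * M) ltac:(lra)).
  assert (S2 : forall a b a' b', Rabs (a - a') <= d -> Rabs (b - b') <= d ->
     Rabs ((a - b) - (a' - b')) <= 2 * d).
  { intros a b a' b' Ha Hb. apply abs_le_e in Ha, Hb. apply le_abs. lra. }
  assert (S3 : forall a b c a' b' c', Rabs (a - a') <= d -> Rabs (b - b') <= d ->
     Rabs (c - c') <= d -> Rabs ((a - b - c) - (a' - b' - c')) <= 3 * d).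
  { intros a b c a' b' c' Ha Hb Hc. apply abs_le_e in Ha, Hb, Hc. apply le_abs. lra. }
  assert (G56 := abs_le_e _ _ (sqdiff _ _ _ (abs2 _ _ _ X5 X6) (abs2 _ _ _ Y5 Y6))).
  assert (G64 := abs_le_e _ _ (sqdiff _ _ _ (abs2 _ _ _ X6 X4) (abs2 _ _ _ Y6 Y4))).
  assert (G45 := abs_le_e _ _ (sqdiff _ _ _ (abs2 _ _ _ X4 X5) (abs2 _ _ _ Y4 Y5))).
  assert (H56 := Md' _ (2 * (2 * M)) 2 (S2 _ _ _ _ D5 D6) ltac:(lra)).
  assert (H64 := Md' _ (2 * (2 * M)) 2 (S2 _ _ _ _ D6 D4) ltac:(lra)).
  assert (H45 := Md' _ (2 * (2 * M)) 2 (S2 _ _ _ _ D4 D5) ltac:(lra)).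
  assert (P01 := abs_le_e _ _ (proddiff (x 0%nat) (x 1%nat) (y 0%nat) (y 1%nat) M M X1 Y0)).
  assert (P02 := abs_le_e _ _ (proddiff (x 0%nat) (x 2%nat) (y 0%nat) (y 2%nat) M M X2 Y0)).
  assert (P03 := abs_le_e _ _ (proddiff (x 0%nat) (x 3%nat) (y 0%nat) (y 3%nat) M M X3 Y0)).
  assert (M0 := Md _ D0 M HM). assert (M1 := Md _ D1 M HM). assert (M2 := Md _ D2 M HM).
  assert (M3 := Md _ D3 M HM). assert (M4 := Md _ D4 M HM). assert (M5 := Md _ D5 M HM).
  assert (M6 := Md _ D6 M HM).
  assert (R4 := abs_le_e _ _ (proddiff (x 4%nat) (x 1%nat - x 2%nat - x 3%nat) (y 4%nat)
       (y 1%nat - y 2%nat - y 3%nat) M (3 * M) (abs3 _ _ _ _ X1 X2 X3) Y4)).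
  assert (R5 := abs_le_e _ _ (proddiff (x 5%nat) (x 2%nat - x 3%nat - x 1%nat) (y 5%nat)
       (y 2%nat - y 3%nat - y 1%nat) M (3 * M) (abs3 _ _ _ _ X2 X3 X1) Y5)).
  assert (R6 := abs_le_e _ _ (proddiff (x 6%nat) (x 3%nat - x 1%nat - x 2%nat) (y 6%nat)
       (y 3%nat - y 1%nat - y 2%nat) M (3 * M) (abs3 _ _ _ _ X3 X1 X2) Y6)).
  assert (T4 := Md' _ M 3 (S3 _ _ _ _ _ _ D1 D2 D3) HM).
  assert (T5 := Md' _ M 3 (S3 _ _ _ _ _ _ D2 D3 D1) HM).
  assert (T6 := Md' _ M 3 (S3 _ _ _ _ _ _ D3 D1 D2) HM).
  assert (W4 := Md _ D4 (3 * M) ltac:(lra)). assert (W5 := Md _ D5 (3 * M) ltac:(lra)).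
  assert (W6 := Md _ D6 (3 * M) ltac:(lra)).
  assert (Md0 : 0 <= M * d) by nra.
  apply le_abs.
  do 7 (destruct i as [|i]; [unfold F, rhs_xi, rhs_L, rhs_R; lra|]). lia.
Qed.

Definition clipM (M a : R) := Rmax (- M) (Rmin M a).
Lemma clipM_bnd M a : 0 <= M -> Rabs (clipM M a) <= M.
Proof. intros. apply le_abs. unfold clipM, Rmax, Rmin.
  repeat destruct Rle_dec; lra. Qed.
Lemma clipM_lip M a b : 0 <= M -> Rabs (clipM M a - clipM M b) <= Rabs (a - b).
Proof. intros. unfold clipM, Rmax, Rmin.
  repeat destruct Rle_dec; unfold Rabs; repeat destruct Rcase_abs; lra. Qed.
Lemma clipM_id M a : Rabs a <= M -> clipM M a = a.
Proof. intros H. apply abs_le_e in H. unfold clipM, Rmax, Rmin.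
  repeat destruct Rle_dec; lra. Qed.

Definition Ft lam M (x : st) := F lam (fun i => clipM M (x i)).

Lemma Ft_bnd lam M x i : 0 <= lam -> 0 <= M -> (i < 7)%nat ->
  Rabs (Ft lam M x i) <= 4 * M ^ 2 + lam + 1.
Proof. intros. apply F_bnd; auto. intros j _. apply clipM_bnd; auto. Qed.

Lemma Ft_lip lam M x y d i : 0 <= M ->
  (forall j, (j < 7)%nat -> Rabs (x j - y j) <= d) -> (i < 7)%nat ->
  Rabs (Ft lam M x i - Ft lam M y i) <= (8 * M + 1) * d.
Proof. intros. apply F_lip; auto; try (intros j _; apply clipM_bnd; auto).
  intros j Hj. eapply Rle_trans. apply clipM_lip; auto. auto. Qed.

Lemma Ft_id lam M x : inbox M x -> forall i, (i < 7)%nat -> Ft lam M x i = F lam x i.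
Proof.
  intros Hx i Hi. unfold Ft.
  assert (E : forall j, (j < 7)%nat -> clipM M (x j) = x j) by (intros; apply clipM_id; auto).
  do 7 (destruct i as [|i]; [unfold F; rewrite ?E by lia; reflexivity|]). lia.
Qed.

Definition clipT t1 h t := Rmax t1 (Rmin (t1 + h) t).
Lemma clipT_rng t1 h t : 0 <= h -> t1 <= clipT t1 h t <= t1 + h.
Proof. intros. unfold clipT, Rmax, Rmin. repeat destruct Rle_dec; lra. Qed.
Lemma clipT_lip t1 h t s : 0 <= h -> Rabs (clipT t1 h t - clipT t1 h s) <= Rabs (t - s).
Proof. intros. unfold clipT, Rmax, Rmin.
  repeat destruct Rle_dec; unfold Rabs; repeat destruct Rcase_abs; lra. Qed.
Lemma clipT_id t1 h t : t1 <= t <= t1 + h -> clipT t1 h t = t.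
Proof. intros. unfold clipT, Rmax, Rmin. repeat destruct Rle_dec; lra. Qed.

Lemma ex_cont (g : R -> R) a b : (forall s, continuous g s) -> ex_RInt g a b.
Proof. intros. apply (ex_RInt_continuous (V:=R_CompleteNormedModule)); auto. Qed.

Lemma int_bnd (g : R -> R) a b C : a <= b -> (forall s, continuous g s) ->
  (forall s, Rabs (g s) <= C) -> Rabs (RInt g a b) <= (b - a) * C.
Proof. intros. apply abs_RInt_le_const; auto. apply ex_cont; auto. Qed.

Lemma RInt_sub (f g : R -> R) a b : ex_RInt f a b -> ex_RInt g a b ->
  RInt f a b - RInt g a b = RInt (fun x => f x - g x) a b.
Proof. intros Hf Hg. symmetry. exact (RInt_minus f g a b Hf Hg). Qed.

Lemma g_cont lam M (y : R -> st) C i : 0 <= M -> 0 <= C ->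
  (forall j, (j < 7)%nat -> forall a b, Rabs (y a j - y b j) <= C * Rabs (a - b)) ->
  (i < 7)%nat -> forall s, continuous (fun s => Ft lam M (y s) i) s.
Proof.
  intros HM HC Hy Hi. apply lip_cont with ((8 * M + 1) * C).
  intros a b. rewrite Rmult_assoc. apply Ft_lip; auto.
Qed.

Lemma cont_sub (f g : R -> R) x : continuous f x -> continuous g x ->
  continuous (fun y => f y - g y) x.
Proof. intros Hf Hg. exact (continuous_minus f g x Hf Hg). Qed.

Lemma addsub (u a b : R) : u + a - (u + b) = a - b.
Proof. ring. Qed.
Lemma addsub0 (u a : R) : u + a - u = a.
Proof. ring. Qed.

Fixpoint pic lam M (u0 : st) t1 h (n : nat) (t : R) : st :=
  match n with
  | O => u0
  | S n => fun i => u0 i + RInt (fun s => Ft lam M (pic lam M u0 t1 h n s) i) t1 (clipT t1 h t)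
  end.

Lemma pic_lip lam M u0 t1 h n : 0 <= lam -> 0 <= M -> 0 <= h ->
  forall i, (i < 7)%nat -> forall t s,
  Rabs (pic lam M u0 t1 h n t i - pic lam M u0 t1 h n s i) <= (4 * M ^ 2 + lam + 1) * Rabs (t - s).
Proof.
  intros Hl HM Hh. assert (0 <= 4 * M ^ 2 + lam + 1) by nra.
  induction n as [|n IH]; intros i Hi t s; simpl.
  - rewrite Rminus_diag, Rabs_R0. assert (0 <= Rabs (t - s)) by apply Rabs_pos. nra.
  - replace (u0 i + RInt (fun s0 => Ft lam M (pic lam M u0 t1 h n s0) i) t1 (clipT t1 h t) -
      (u0 i + RInt (fun s0 => Ft lam M (pic lam M u0 t1 h n s0) i) t1 (clipT t1 h s)))
      with (RInt (fun s0 => Ft lam M (pic lam M u0 t1 h n s0) i) t1 (clipT t1 h t) -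
       RInt (fun s0 => Ft lam M (pic lam M u0 t1 h n s0) i) t1 (clipT t1 h s)) by ring.
    eapply Rle_trans. apply int_diff.
    + apply g_cont with (4 * M ^ 2 + lam + 1); auto.
    + intros; apply Ft_bnd; auto.
    + apply Rmult_le_compat_l; auto. apply clipT_lip; auto.
Qed.

Lemma pic_cont lam M u0 t1 h n i : 0 <= lam -> 0 <= M -> 0 <= h -> (i < 7)%nat ->
  forall s, continuous (fun s => Ft lam M (pic lam M u0 t1 h n s) i) s.
Proof. intros. apply g_cont with (4 * M ^ 2 + lam + 1); auto. nra.
  intros; apply pic_lip; auto. Qed.

Lemma pic_diff lam M u0 t1 h : 0 <= lam -> 0 <= M -> 0 <= h -> h * (8 * M + 1) <= 1/2 ->
  forall n i t, (i < 7)%nat ->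
  Rabs (pic lam M u0 t1 h (S n) t i - pic lam M u0 t1 h n t i) <= (4 * M ^ 2 + lam + 1) * h * (1/2) ^ n.
Proof.
  intros Hl HM Hh HK. assert (HB : 0 <= 4 * M ^ 2 + lam + 1) by nra.
  induction n as [|n IH]; intros i t Hi.
  - simpl. rewrite addsub0.
    destruct (clipT_rng t1 h t Hh).
    eapply Rle_trans. apply int_bnd with (C := 4 * M ^ 2 + lam + 1); auto.
    intros; apply continuous_const. intros; apply Ft_bnd; auto. nra.
  - change (Rabs ((u0 i + RInt (fun s => Ft lam M (pic lam M u0 t1 h (S n) s) i) t1 (clipT t1 h t)) -
      (u0 i + RInt (fun s => Ft lam M (pic lam M u0 t1 h n s) i) t1 (clipT t1 h t)))
      <= (4 * M ^ 2 + lam + 1) * h * (1 / 2) ^ S n).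
    rewrite addsub.
    rewrite RInt_sub by (apply ex_cont; apply pic_cont; auto).
    destruct (clipT_rng t1 h t Hh).
    eapply Rle_trans. apply int_bnd with (C := (8 * M + 1) * ((4 * M ^ 2 + lam + 1) * h * (1/2) ^ n)).
    + lra.
    + intros. apply cont_sub; apply pic_cont; auto.
    + intros s. apply Ft_lip; auto; intros j Hj; apply IH; auto.
    + simpl. assert (0 <= (4 * M ^ 2 + lam + 1) * h * (1 / 2) ^ n).
      { apply Rmult_le_pos. nra. apply pow_le; lra. }
      assert ((clipT t1 h t - t1) * (8 * M + 1) <= 1/2) by nra.
      nra.
Qed.

Lemma tri a b c : Rabs (a - c) <= Rabs (a - b) + Rabs (b - c).
Proof. replace (a - c) with ((a - b) + (b - c)) by ring. apply Rabs_triang. Qed.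

Lemma pic_cauchy lam M u0 t1 h : 0 <= lam -> 0 <= M -> 0 <= h -> h * (8 * M + 1) <= 1/2 ->
  forall k n i t, (i < 7)%nat ->
  Rabs (pic lam M u0 t1 h (n + k) t i - pic lam M u0 t1 h n t i) <=
  2 * (4 * M ^ 2 + lam + 1) * h * (1/2) ^ n - 2 * (4 * M ^ 2 + lam + 1) * h * (1/2) ^ (n + k).
Proof.
  intros Hl HM Hh HK. induction k as [|k IH]; intros n i t Hi.
  - rewrite Nat.add_0_r, Rminus_diag, Rabs_R0. lra.
  - rewrite Nat.add_succ_r. eapply Rle_trans. apply tri with (b := pic lam M u0 t1 h (n + k) t i).
    pose proof (pic_diff lam M u0 t1 h Hl HM Hh HK (n + k) i t Hi).
    pose proof (IH n i t Hi).
    change ((1/2) ^ S (n + k)) with (1/2 * (1/2) ^ (n + k)). lra.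
Qed.

Definition uu lam M u0 t1 h (t : R) : st :=
  fun i => Lim_seq (fun n => pic lam M u0 t1 h n t i).

Lemma uu_close lam M u0 t1 h : 0 <= lam -> 0 <= M -> 0 <= h -> h * (8 * M + 1) <= 1/2 ->
  forall n i t, (i < 7)%nat ->
  Rabs (uu lam M u0 t1 h t i - pic lam M u0 t1 h n t i) <= 2 * (4 * M ^ 2 + lam + 1) * h * (1/2) ^ n.
Proof.
  intros Hl HM Hh HK n i t Hi.
  set (B := 4 * M ^ 2 + lam + 1).
  assert (HB : 0 <= B) by (unfold B; nra).
  set (u := fun n => pic lam M u0 t1 h n t i).
  assert (Hc : forall k n, Rabs (u (n + k)%nat - u n) <= 2 * B * h * (1/2) ^ n).
  { intros k m. unfold u. eapply Rle_trans. apply pic_cauchy; auto.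
    assert (0 <= (1/2) ^ (m + k)) by (apply pow_le; lra).
    assert (0 <= 2 * B * h * (1/2) ^ (m + k)) by (apply Rmult_le_pos; [nra| auto]).
    fold B. lra. }
  assert (Hex : ex_finite_lim_seq u).
  { apply ex_lim_seq_cauchy_corr. intros eps.
    assert (Hy : 0 < eps / (4 * B * h + 1)).
    { apply Rdiv_lt_0_compat. apply cond_pos. nra. }
    destruct (pow_lt_1_zero (1/2) ltac:(rewrite Rabs_pos_eq; lra) _ Hy) as [N HN].
    exists N. intros p q Hp Hq.
    specialize (HN N (le_n N)). rewrite Rabs_pos_eq in HN by (apply pow_le; lra).
    eapply Rle_lt_trans. apply tri with (b := u N).
    pose proof (Hc (p - N)%nat N) as H1. pose proof (Hc (q - N)%nat N) as H2.
    replace (N + (p - N))%nat with p in H1 by lia.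
    replace (N + (q - N))%nat with q in H2 by lia.
    rewrite Rabs_minus_sym with (u N) (u q).
    assert (0 < eps) by apply cond_pos.
    assert (4 * B * h * (1/2)^N <= 4 * B * h * (eps / (4 * B * h + 1))).
    { apply Rmult_le_compat_l. nra. lra. }
    assert (4 * B * h * (eps / (4 * B * h + 1)) < eps).
    { apply Rmult_lt_reg_r with (4 * B * h + 1). nra.
      unfold Rdiv. field_simplify; nra. }
    lra. }
  pose proof (Lim_seq_correct' u Hex) as Hl1.
  change (uu lam M u0 t1 h t i) with (real (Lim_seq u)).
  change (pic lam M u0 t1 h n t i) with (u n).
  assert (Hl2 : is_lim_seq (fun k => Rabs (u (k + n)%nat - u n)) (Rabs (Lim_seq u - u n))).
  { apply (is_lim_seq_abs _ (Finite (Lim_seq u - u n))).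
    apply is_lim_seq_minus'. apply is_lim_seq_incr_n. exact Hl1. apply is_lim_seq_const. }
  assert (Hl3 := is_lim_seq_le _ _ _ _ (fun k => (eq_ind _ (fun m => Rabs (u m - u n) <= _) (Hc k n) _ (Nat.add_comm n k)))
     Hl2 (is_lim_seq_const (2 * B * h * (1/2) ^ n))).
  exact Hl3.
Qed.

Lemma uu_lip lam M u0 t1 h : 0 <= lam -> 0 <= M -> 0 <= h -> h * (8 * M + 1) <= 1/2 ->
  forall i, (i < 7)%nat -> forall t s,
  Rabs (uu lam M u0 t1 h t i - uu lam M u0 t1 h s i) <= (4 * M ^ 2 + lam + 1) * Rabs (t - s).
Proof.
  intros Hl HM Hh HK i Hi t s.
  assert (HB : 0 <= 4 * M ^ 2 + lam + 1) by nra.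
  cut (Rabs (uu lam M u0 t1 h t i - uu lam M u0 t1 h s i) - (4 * M ^ 2 + lam + 1) * Rabs (t - s) <= 0).
  lra.
  apply small_zero with (C := 4 * (4 * M ^ 2 + lam + 1) * h). nra.
  intros n.
  pose proof (tri (uu lam M u0 t1 h t i) (pic lam M u0 t1 h n t i) (uu lam M u0 t1 h s i)).
  pose proof (tri (pic lam M u0 t1 h n t i) (pic lam M u0 t1 h n s i) (uu lam M u0 t1 h s i)).
  pose proof (uu_close lam M u0 t1 h Hl HM Hh HK n i t Hi).
  pose proof (uu_close lam M u0 t1 h Hl HM Hh HK n i s Hi).
  rewrite Rabs_minus_sym in H2.
  pose proof (pic_lip lam M u0 t1 h n Hl HM Hh i Hi t s).
  lra.
Qed.

Lemma uu_u0 lam M u0 t1 h : 0 <= lam -> 0 <= M -> 0 <= h -> h * (8 * M + 1) <= 1/2 ->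
  forall i t, (i < 7)%nat ->
  Rabs (uu lam M u0 t1 h t i - u0 i) <= 2 * (4 * M ^ 2 + lam + 1) * h.
Proof.
  intros Hl HM Hh HK i t Hi.
  pose proof (uu_close lam M u0 t1 h Hl HM Hh HK 0 i t Hi). simpl in H. lra.
Qed.

Lemma uu_cont lam M u0 t1 h i : 0 <= lam -> 0 <= M -> 0 <= h -> h * (8 * M + 1) <= 1/2 ->
  (i < 7)%nat -> forall s, continuous (fun s => Ft lam M (uu lam M u0 t1 h s) i) s.
Proof. intros. apply g_cont with (4 * M ^ 2 + lam + 1); auto. nra.
  intros; apply uu_lip; auto. Qed.

Lemma uu_int lam M u0 t1 h : 0 <= lam -> 0 <= M -> 0 <= h -> h * (8 * M + 1) <= 1/2 ->
  forall i t, (i < 7)%nat ->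
  uu lam M u0 t1 h t i = u0 i + RInt (fun s => Ft lam M (uu lam M u0 t1 h s) i) t1 (clipT t1 h t).
Proof.
  intros Hl HM Hh HK i t Hi.
  set (B := 4 * M ^ 2 + lam + 1). assert (HB : 0 <= B) by (unfold B; nra).
  set (G := RInt (fun s => Ft lam M (uu lam M u0 t1 h s) i) t1 (clipT t1 h t)).
  cut (Rabs (uu lam M u0 t1 h t i - (u0 i + G)) <= 0).
  { intros H. apply abs_le_e in H. lra. }
  apply small_zero with (C := 2 * B * h).
  { assert (0 <= B * h) by (apply Rmult_le_pos; lra). lra. }
  intros n.
  pose proof (tri (uu lam M u0 t1 h t i) (pic lam M u0 t1 h (S n) t i) (u0 i + G)) as T1.
  pose proof (uu_close lam M u0 t1 h Hl HM Hh HK (S n) i t Hi) as C1.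
  change (pic lam M u0 t1 h (S n) t i) with
    (u0 i + RInt (fun s => Ft lam M (pic lam M u0 t1 h n s) i) t1 (clipT t1 h t)) in T1, C1.
  rewrite addsub in T1. unfold G in T1.
  assert (Cp : forall s, continuous (fun s => Ft lam M (pic lam M u0 t1 h n s) i) s)
    by (apply pic_cont; auto).
  assert (Cu : forall s, continuous (fun s => Ft lam M (uu lam M u0 t1 h s) i) s)
    by (apply uu_cont; auto).
  rewrite (RInt_sub _ _ _ _ (ex_cont _ _ _ Cp) (ex_cont _ _ _ Cu)) in T1.
  destruct (clipT_rng t1 h t Hh).
  assert (I1 : Rabs (RInt (fun x => Ft lam M (pic lam M u0 t1 h n x) i - Ft lam M (uu lam M u0 t1 h x) i) t1 (clipT t1 h t))
     <= (clipT t1 h t - t1) * ((8 * M + 1) * (2 * B * h * (1/2) ^ n))).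
  { apply int_bnd. lra. intros; apply cont_sub; [apply Cp | apply Cu].
    intros s. apply Ft_lip; auto. intros j Hj. rewrite Rabs_minus_sym. apply uu_close; auto. }
  fold B in C1. change ((1/2) ^ S n) with (1/2 * (1/2) ^ n) in C1.
  assert (0 <= B * h) by (apply Rmult_le_pos; lra).
  assert (0 <= 2 * B * h * (1/2) ^ n) by (apply Rmult_le_pos; [lra | apply pow_le; lra]).
  assert ((clipT t1 h t - t1) * (8 * M + 1) <= 1/2).
  { eapply Rle_trans; [|exact HK]. apply Rmult_le_compat_r; lra. }
  assert ((clipT t1 h t - t1) * ((8 * M + 1) * (2 * B * h * (1/2) ^ n)) <= 1/2 * (2 * B * h * (1/2) ^ n)).
  { rewrite <- Rmult_assoc. apply Rmult_le_compat_r; lra. }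
  unfold G. lra.
Qed.

Lemma uu_deriv lam M u0 t1 h : 0 <= lam -> 0 <= M -> 0 <= h -> h * (8 * M + 1) <= 1/2 ->
  forall i t, (i < 7)%nat -> t1 < t < t1 + h ->
  derivable_pt_lim (fun s => uu lam M u0 t1 h s i) t (Ft lam M (uu lam M u0 t1 h t) i).
Proof.
  intros Hl HM Hh HK i t Hi Ht.
  set (f := fun s => Ft lam M (uu lam M u0 t1 h s) i).
  assert (Hc : forall s, continuous f s) by (intros; apply uu_cont; auto).
  assert (D0 : is_derive (fun s => RInt f t1 s) t (f t)).
  { apply is_derive_RInt with (a := t1).
    exists (mkposreal 1 Rlt_0_1). intros y _. apply RInt_correct. apply ex_cont; auto.
    auto. }
  assert (D1 : is_derive (fun s => u0 i + RInt f t1 s) t (f t)).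
  { pose proof (is_derive_plus _ _ t _ _ (is_derive_const (u0 i) t) D0) as D.
    replace (f t) with (plus zero (f t)). exact D. unfold plus, zero; simpl; ring. }
  apply is_derive_Reals.
  apply is_derive_ext_loc with (f := fun s => u0 i + RInt f t1 s); auto.
  assert (He : 0 < Rmin (t - t1) (t1 + h - t)) by (apply Rmin_pos; lra).
  exists (mkposreal _ He). intros y Hy. change (Rabs (y - t) < Rmin (t - t1) (t1 + h - t)) in Hy.
  assert (Hy1 := Rmin_l (t - t1) (t1 + h - t)). assert (Hy2 := Rmin_r (t - t1) (t1 + h - t)).
  apply Rabs_def2 in Hy as [Hy3 Hy4].
  rewrite (uu_int lam M u0 t1 h Hl HM Hh HK i y Hi). rewrite clipT_id by lra. reflexivity.
Qed.

Lemma exp_mono x y : x <= y -> exp x <= exp y.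
Proof. intros H. destruct (Rle_lt_or_eq_dec _ _ H) as [H1|H1].
  left; apply exp_increasing; auto. subst; lra. Qed.

Lemma lin_deriv f r d a : derivable_pt_lim f r d ->
  derivable_pt_lim (fun t => f t + a * t) r (d + a).
Proof.
  intros Hf. pose proof (derivable_pt_lim_scal id a r 1 (derivable_pt_lim_id r)) as H.
  rewrite Rmult_1_r in H. exact (derivable_pt_lim_plus f (mult_real_fct a id) r d a Hf H).
Qed.

Lemma abs_sq x P : x ^ 2 <= P -> Rabs x <= 1 + P.
Proof. intros H. rewrite <- (pow2_abs x) in H.
  assert (0 <= (Rabs x - 1) ^ 2) by apply pow2_ge_0. nra. Qed.

Lemma R_en (Ri Li Lj Lk xi dx : R -> R) T S :
  (forall r, T < r < S -> derivable_pt_lim Ri r (rhs_R (Ri r) (Li r) (Lj r) (Lk r)) /\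
     derivable_pt_lim xi r (dx r) /\ dx r <= - Li r ^ 2 - Lj r ^ 2 - Lk r ^ 2) ->
  forall x y, T < x -> x <= y -> y < S ->
  (Ri y ^ 2 + 0) * exp (xi y + (-3) * y) <= (Ri x ^ 2 + 0) * exp (xi x + (-3) * x).
Proof.
  intros H. apply nonincr with (d := fun r => (2 * Ri r * rhs_R (Ri r) (Li r) (Lj r) (Lk r) +
     (Ri r ^ 2 + 0) * (dx r + -3)) * exp (xi r + (-3) * r)).
  intros r Hr. destruct (H r Hr) as [H1 [H2 H3]]. split.
  - apply (fexp_deriv (fun t => Ri t ^ 2 + 0) (fun t => xi t + (-3) * t)).
    apply sq_deriv; auto. apply lin_deriv; auto.
  - unfold rhs_R. set (q := dx r). set (a := Ri r). set (u := Li r). set (v := Lj r). set (w := Lk r).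
    assert (0 <= (u - 1) ^ 2) by apply pow2_ge_0.
    assert (0 <= (v + 1) ^ 2) by apply pow2_ge_0.
    assert (0 <= (w + 1) ^ 2) by apply pow2_ge_0.
    assert (Hq : 2 * (u - v - w) + q - 3 <= 0) by (fold q u v w in H3; nra).
    assert (Ha : 0 <= a ^ 2) by apply pow2_ge_0.
    assert (He : 0 < exp (xi r + -3 * r)) by apply exp_pos.
    assert (E : 2 * a * (a * (u - v - w)) + (a ^ 2 + 0) * (q + -3) = a ^ 2 * (2 * (u - v - w) + q - 3)) by ring.
    rewrite E.
    assert (a ^ 2 * (2 * (u - v - w) + q - 3) <= 0) by nra.
    nra.
Qed.

Lemma L_en (Li Ri Rj Rk xi : R -> R) lam a b X P :
  0 <= lam -> 0 <= X -> 0 <= P ->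
  (forall r, a < r < b -> derivable_pt_lim Li r (rhs_L lam (xi r) (Li r) (Ri r) (Rj r) (Rk r)) /\
     Rabs (xi r) <= X /\ Ri r ^ 2 <= P /\ Rj r ^ 2 <= P /\ Rk r ^ 2 <= P) ->
  forall x y, a < x -> x <= y -> y < b ->
  (Li y ^ 2 + (3 * P + lam) ^ 2) * exp (0 + (- (2 * X + 1)) * y) <=
  (Li x ^ 2 + (3 * P + lam) ^ 2) * exp (0 + (- (2 * X + 1)) * x).
Proof.
  intros Hl HX HP H.
  set (Q := (3 * P + lam) ^ 2). set (c := - (2 * X + 1)).
  apply nonincr with (d := fun r => (2 * Li r * rhs_L lam (xi r) (Li r) (Ri r) (Rj r) (Rk r) +
     (Li r ^ 2 + Q) * (0 + c)) * exp (0 + c * r)).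
  intros r Hr. destruct (H r Hr) as [H1 [H2 [H3 [H4 H5]]]]. split.
  - apply (fexp_deriv (fun t => Li t ^ 2 + Q) (fun t => 0 + c * t)).
    apply sq_deriv; auto. apply lin_deriv. apply derivable_pt_lim_const.
  - unfold rhs_L.
    set (L := Li r). set (z := xi r). set (u := Ri r). set (v := Rj r). set (w := Rk r).
    fold L u v w in H3, H4, H5. fold z in H2.
    set (bb := u ^ 2 / 2 - (v - w) ^ 2 / 2 - lam).
    assert (0 <= (v + w) ^ 2) by apply pow2_ge_0.
    assert (0 <= u ^ 2) by apply pow2_ge_0.
    assert (0 <= (v - w) ^ 2) by apply pow2_ge_0.
    assert (Hb1 : - (3 * P + lam) <= bb <= 3 * P + lam) by (unfold bb; split; nra).
    assert (Hb2 : bb ^ 2 <= Q) by (unfold Q; nra).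
    apply abs_le_e in H2.
    assert (0 <= L ^ 2) by apply pow2_ge_0.
    assert (Hz : - z * L ^ 2 <= X * L ^ 2) by nra.
    assert (0 <= (L - bb) ^ 2) by apply pow2_ge_0.
    assert (HQ : 0 <= X * Q) by (apply Rmult_le_pos; unfold Q; auto; apply pow2_ge_0).
    assert (E0 : - z * L + u ^ 2 / 2 - (v - w) ^ 2 / 2 - lam = - z * L + bb) by (unfold bb; ring).
    rewrite E0.
    assert (E : 2 * L * (- z * L + bb) + (L ^ 2 + Q) * (0 + c) <= 0).
    { unfold c. clear E0. clearbody bb Q. nra. }
    assert (He : 0 < exp (0 + c * r)) by apply exp_pos.
    nra.
Qed.

Lemma en_bound V g C E : 0 <= V -> V * exp g <= C -> exp (- g) <= E -> V <= C * E.
Proof.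
  intros HV H1 H2.
  assert (Hg : 0 < exp g) by apply exp_pos. assert (Hg' : 0 < exp (- g)) by apply exp_pos.
  assert (Ee : exp g * exp (- g) = 1) by (rewrite <- exp_plus, Rplus_opp_r; apply exp_0).
  assert (0 <= C) by nra.
  replace V with (V * exp g * exp (- g)) by (rewrite Rmult_assoc, Ee; ring).
  apply Rle_trans with (C * exp (- g)). apply Rmult_le_compat_r; lra.
  apply Rmult_le_compat_l; lra.
Qed.

Definition pack (a0 a1 a2 a3 a4 a5 a6 : R) : st := fun i =>
  match i with 0 => a0 | 1 => a1 | 2 => a2 | 3 => a3 | 4 => a4 | 5 => a5 | 6 => a6 | _ => 0 end.

Definition DerivHyp (lam T S : R) (xi L1 L2 L3 R1 R2 R3 : R -> R) : Prop :=
  forall r, T < r < S ->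
     derivable_pt_lim xi r (rhs_xi lam (L1 r) (L2 r) (L3 r)) /\
     derivable_pt_lim L1 r (rhs_L lam (xi r) (L1 r) (R1 r) (R2 r) (R3 r)) /\
     derivable_pt_lim L2 r (rhs_L lam (xi r) (L2 r) (R2 r) (R3 r) (R1 r)) /\
     derivable_pt_lim L3 r (rhs_L lam (xi r) (L3 r) (R3 r) (R1 r) (R2 r)) /\
     derivable_pt_lim R1 r (rhs_R (R1 r) (L1 r) (L2 r) (L3 r)) /\
     derivable_pt_lim R2 r (rhs_R (R2 r) (L2 r) (L3 r) (L1 r)) /\
     derivable_pt_lim R3 r (rhs_R (R3 r) (L3 r) (L1 r) (L2 r)).

Lemma xi_nonincr lam T S xi L1 L2 L3 R1 R2 R3 : 0 <= lam ->
  DerivHyp lam T S xi L1 L2 L3 R1 R2 R3 ->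
  forall x y, T < x -> x <= y -> y < S -> xi y <= xi x.
Proof.
  intros Hl Hd. apply nonincr with (d := fun r => rhs_xi lam (L1 r) (L2 r) (L3 r)).
  intros r Hr. split. apply Hd; auto. unfold rhs_xi.
  assert (0 <= L1 r ^ 2) by apply pow2_ge_0. assert (0 <= L2 r ^ 2) by apply pow2_ge_0.
  assert (0 <= L3 r ^ 2) by apply pow2_ge_0. lra.
Qed.

Lemma apriori lam T S xi L1 L2 L3 R1 R2 R3 A0 : 0 <= lam -> T < S ->
  DerivHyp lam T S xi L1 L2 L3 R1 R2 R3 -> (forall r, T < r < S -> A0 <= xi r) ->
  exists tb M0, T < tb < S /\ 0 <= M0 /\ forall r, tb <= r < S ->
    inbox M0 (pack (xi r) (L1 r) (L2 r) (L3 r) (R1 r) (R2 r) (R3 r)).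
Proof.
  intros Hl HTS Hd HA.
  assert (Hxi := xi_nonincr lam T S xi L1 L2 L3 R1 R2 R3 Hl Hd).
  set (t0 := (T + S) / 2).
  set (X := Rabs A0 + Rabs (xi t0)).
  assert (HX : 0 <= X) by (unfold X; assert (0 <= Rabs A0) by apply Rabs_pos;
     assert (0 <= Rabs (xi t0)) by apply Rabs_pos; lra).
  assert (Hxb : forall r, t0 <= r < S -> Rabs (xi r) <= X).
  { intros r Hr. apply le_abs. assert (A0 <= xi r) by (apply HA; unfold t0 in *; lra).
    assert (xi r <= xi t0) by (apply Hxi; unfold t0 in *; lra).
    pose proof (Rle_abs (xi t0)). pose proof (Rle_abs (- A0)) as Ha0. rewrite Rabs_Ropp in Ha0.
    pose proof (Rabs_pos A0). pose proof (Rabs_pos (xi t0)). unfold X. lra. }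
  assert (Hsq : forall a b c : R, - a ^ 2 - b ^ 2 - c ^ 2 - lam <= - a ^ 2 - b ^ 2 - c ^ 2)
    by (intros; lra).
  assert (ER1 := R_en R1 L1 L2 L3 xi (fun r => rhs_xi lam (L1 r) (L2 r) (L3 r)) T S
     ltac:(intros r Hr; destruct (Hd r Hr) as [? [? [? [? [? [? ?]]]]]]; repeat split; auto;
           unfold rhs_xi; lra)).
  assert (ER2 := R_en R2 L2 L3 L1 xi (fun r => rhs_xi lam (L1 r) (L2 r) (L3 r)) T S
     ltac:(intros r Hr; destruct (Hd r Hr) as [? [? [? [? [? [? ?]]]]]]; repeat split; auto;
           unfold rhs_xi; lra)).
  assert (ER3 := R_en R3 L3 L1 L2 xi (fun r => rhs_xi lam (L1 r) (L2 r) (L3 r)) T S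
     ltac:(intros r Hr; destruct (Hd r Hr) as [? [? [? [? [? [? ?]]]]]]; repeat split; auto;
           unfold rhs_xi; lra)).
  set (E := exp (- (A0 + -3 * S))).
  assert (HEr : forall r, t0 <= r < S -> exp (- (xi r + -3 * r)) <= E).
  { intros r Hr. apply exp_mono. assert (A0 <= xi r) by (apply HA; unfold t0 in *; lra). lra. }
  set (P := (R1 t0 ^ 2 + 0) * exp (xi t0 + -3 * t0) * E + (R2 t0 ^ 2 + 0) * exp (xi t0 + -3 * t0) * E
     + (R3 t0 ^ 2 + 0) * exp (xi t0 + -3 * t0) * E).
  assert (Hpos : forall a, 0 <= (a ^ 2 + 0) * exp (xi t0 + -3 * t0) * E).
  { intros a. apply Rmult_le_pos; [apply Rmult_le_pos|]. assert (0 <= a ^ 2) by apply pow2_ge_0. lra.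
    left; apply exp_pos. left; apply exp_pos. }
  assert (HP : 0 <= P) by (unfold P; pose proof (Hpos (R1 t0)); pose proof (Hpos (R2 t0));
     pose proof (Hpos (R3 t0)); lra).
  assert (HRb : forall r, t0 <= r < S -> R1 r ^ 2 <= P /\ R2 r ^ 2 <= P /\ R3 r ^ 2 <= P).
  { intros r Hr.
    assert (t0 > T) by (unfold t0; lra).
    assert (B1 := en_bound (R1 r ^ 2 + 0) _ _ _ ltac:(assert (0 <= R1 r ^ 2) by apply pow2_ge_0; lra)
       (ER1 t0 r ltac:(lra) ltac:(lra) ltac:(lra)) (HEr r Hr)).
    assert (B2 := en_bound (R2 r ^ 2 + 0) _ _ _ ltac:(assert (0 <= R2 r ^ 2) by apply pow2_ge_0; lra)
       (ER2 t0 r ltac:(lra) ltac:(lra) ltac:(lra)) (HEr r Hr)).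
    assert (B3 := en_bound (R3 r ^ 2 + 0) _ _ _ ltac:(assert (0 <= R3 r ^ 2) by apply pow2_ge_0; lra)
       (ER3 t0 r ltac:(lra) ltac:(lra) ltac:(lra)) (HEr r Hr)).
    pose proof (Hpos (R1 t0)). pose proof (Hpos (R2 t0)). pose proof (Hpos (R3 t0)).
    unfold P. lra. }
  assert (Hin : forall r, t0 < r < S -> t0 <= r < S) by (intros; lra).
  assert (EL1 := L_en L1 R1 R2 R3 xi lam t0 S X P Hl HX HP
     ltac:(intros r Hr; destruct (Hd r ltac:(unfold t0 in *; lra)) as [? [? [? [? [? [? ?]]]]]];
       destruct (HRb r (Hin r Hr)) as [? [? ?]]; repeat split; auto; apply Hxb; lra)).
  assert (EL2 := L_en L2 R2 R3 R1 xi lam t0 S X P Hl HX HP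
     ltac:(intros r Hr; destruct (Hd r ltac:(unfold t0 in *; lra)) as [? [? [? [? [? [? ?]]]]]];
       destruct (HRb r (Hin r Hr)) as [? [? ?]]; repeat split; auto; apply Hxb; lra)).
  assert (EL3 := L_en L3 R3 R1 R2 xi lam t0 S X P Hl HX HP
     ltac:(intros r Hr; destruct (Hd r ltac:(unfold t0 in *; lra)) as [? [? [? [? [? [? ?]]]]]];
       destruct (HRb r (Hin r Hr)) as [? [? ?]]; repeat split; auto; apply Hxb; lra)).
  set (t1 := (t0 + S) / 2).
  set (Q := (3 * P + lam) ^ 2). set (c := - (2 * X + 1)).
  set (EL := exp (- (0 + c * S))).
  assert (HQ : 0 <= Q) by apply pow2_ge_0.
  assert (HEL : forall r, r < S -> exp (- (0 + c * r)) <= EL).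
  { intros r Hr. apply exp_mono. unfold c. nra. }
  set (CL := fun a : R -> R => (a t1 ^ 2 + Q) * exp (0 + c * t1) * EL).
  assert (HLb : forall a : R -> R,
     (forall r, t1 <= r < S -> (a r ^ 2 + Q) * exp (0 + c * r) <= (a t1 ^ 2 + Q) * exp (0 + c * t1)) ->
     forall r, t1 <= r < S -> a r ^ 2 <= CL a /\ 0 <= CL a).
  { intros a Ha r Hr. assert (0 <= a r ^ 2) by apply pow2_ge_0.
    pose proof (en_bound (a r ^ 2 + Q) _ _ _ ltac:(lra) (Ha r Hr) (HEL r ltac:(lra))).
    assert (0 <= a t1 ^ 2) by apply pow2_ge_0.
    assert (0 <= CL a).
    { unfold CL. apply Rmult_le_pos; [apply Rmult_le_pos|]; try lra; left; apply exp_pos. }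
    unfold CL in *. lra. }
  assert (T1 : forall r, t1 <= r < S -> t0 < t1 /\ t1 <= r /\ r < S) by (intros; unfold t1, t0 in *; lra).
  assert (HL1 := HLb L1 ltac:(intros r Hr; destruct (T1 r Hr) as [? [? ?]]; apply EL1; auto)).
  assert (HL2 := HLb L2 ltac:(intros r Hr; destruct (T1 r Hr) as [? [? ?]]; apply EL2; auto)).
  assert (HL3 := HLb L3 ltac:(intros r Hr; destruct (T1 r Hr) as [? [? ?]]; apply EL3; auto)).
  exists t1, (1 + X + (1 + P) + (1 + CL L1) + (1 + CL L2) + (1 + CL L3)).
  assert (Ht1 : T < t1 < S) by (unfold t1, t0; lra).
  assert (Hc1 : 0 <= CL L1) by (apply (HL1 t1); lra).
  assert (Hc2 : 0 <= CL L2) by (apply (HL2 t1); lra).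
  assert (Hc3 : 0 <= CL L3) by (apply (HL3 t1); lra).
  split; auto. split. lra.
  intros r Hr i Hi.
  assert (Hr0 : t0 <= r < S) by (unfold t1, t0 in *; lra).
  destruct (HRb r Hr0) as [P1 [P2 P3]].
  destruct (HL1 r Hr) as [Q1 _]. destruct (HL2 r Hr) as [Q2 _]. destruct (HL3 r Hr) as [Q3 _].
  apply abs_sq in P1, P2, P3, Q1, Q2, Q3.
  pose proof (Hxb r Hr0).
  do 7 (destruct i as [|i]; [simpl; lra|]). lia.
Qed.

Lemma F_ext lam x y i : (forall j, (j < 7)%nat -> x j = y j) -> F lam x i = F lam y i.
Proof.
  intros H. do 7 (destruct i as [|i]; [unfold F; rewrite ?H by lia; reflexivity|]). reflexivity.
Qed.

Lemma o_deriv lam T S xi L1 L2 L3 R1 R2 R3 :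
  DerivHyp lam T S xi L1 L2 L3 R1 R2 R3 ->
  forall r, T < r < S -> forall i, (i < 7)%nat ->
  derivable_pt_lim (fun s => pack (xi s) (L1 s) (L2 s) (L3 s) (R1 s) (R2 s) (R3 s) i) r
    (F lam (pack (xi r) (L1 r) (L2 r) (L3 r) (R1 r) (R2 r) (R3 r)) i).
Proof.
  intros Hd r Hr i Hi. destruct (Hd r Hr) as [D0 [D1 [D2 [D3 [D4 [D5 D6]]]]]].
  do 7 (destruct i as [|i]; [simpl; assumption|]). lia.
Qed.

Lemma uu_contpt lam M u0 t1 h i x : 0 <= lam -> 0 <= M -> 0 <= h -> h * (8 * M + 1) <= 1/2 ->
  (i < 7)%nat -> continuity_pt (fun s => uu lam M u0 t1 h s i) x.
Proof.
  intros. apply continuity_pt_filterlim. apply lip_cont with (4 * M ^ 2 + lam + 1).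
  intros; apply uu_lip; auto.
Qed.

Lemma uu_t1 lam M u0 t1 h i : 0 <= lam -> 0 <= M -> 0 <= h -> h * (8 * M + 1) <= 1/2 ->
  (i < 7)%nat -> uu lam M u0 t1 h t1 i = u0 i.
Proof.
  intros. rewrite uu_int by auto. rewrite clipT_id by lra. rewrite RInt_point.
  change (u0 i + 0 = u0 i). ring.
Qed.

Lemma unique lam M u0 t1 h T Sm (o : R -> st) :
  0 <= lam -> 0 <= M -> 0 < h -> h * (8 * M + 1) <= 1/2 -> T < t1 < Sm -> Sm < t1 + h ->
  (forall r, T < r < Sm -> forall i, (i < 7)%nat -> derivable_pt_lim (fun s => o s i) r (F lam (o r) i)) ->
  (forall r, t1 <= r < Sm -> inbox M (o r)) ->
  (forall i, (i < 7)%nat -> u0 i = o t1 i) ->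
  (forall r, inbox M (uu lam M u0 t1 h r)) ->
  forall t, t1 <= t < Sm -> forall i, (i < 7)%nat -> o t i = uu lam M u0 t1 h t i.
Proof.
  intros Hl HM Hh HK Ht1 HS Ho Hob Hu0 HUb.
  assert (Hh0 : 0 <= h) by lra.
  set (U := uu lam M u0 t1 h).
  assert (Cl : forall n t, t1 <= t < Sm -> forall i, (i < 7)%nat -> Rabs (o t i - U t i) <= 2 * M * (1/2) ^ n).
  { induction n as [|n IH]; intros t Ht i Hi.
    - simpl. pose proof (abs_le_e _ _ (Hob t Ht i Hi)). pose proof (abs_le_e _ _ (HUb t i Hi)).
      apply le_abs. fold U in H0. lra.
    - destruct (Req_dec t t1) as [E|E].
      + subst t. unfold U. rewrite uu_t1 by auto. rewrite Hu0 by auto. rewrite Rminus_diag, Rabs_R0.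
        assert (0 <= (1/2) ^ Datatypes.S n) by (apply pow_le; lra). nra.
      + destruct (MVT_gen (fun s => o s i - U s i) t1 t (fun s => F lam (o s) i - Ft lam M (U s) i))
          as [c [Hc Heq]].
        * intros x Hx. rewrite Rmin_left in Hx by lra. rewrite Rmax_right in Hx by lra.
          apply is_derive_Reals.
          exact (derivable_pt_lim_minus _ _ _ _ _ (Ho x ltac:(lra) i Hi)
            (uu_deriv lam M u0 t1 h Hl HM Hh0 HK i x Hi ltac:(lra))).
        * intros x Hx. rewrite Rmin_left in Hx by lra. rewrite Rmax_right in Hx by lra.
          apply (continuity_pt_minus (fun s => o s i) (fun s => U s i)).
          apply derivable_continuous_pt. exists (F lam (o x) i). apply Ho; auto. lra.
          apply uu_contpt; auto.
        * rewrite Rmin_left in Hc by lra. rewrite Rmax_right in Hc by lra.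
          unfold U in Heq. rewrite uu_t1 in Heq by auto. rewrite Hu0 in Heq by auto. fold U in Heq.
          rewrite Rminus_diag, Rminus_0_r in Heq.
          rewrite Heq. rewrite <- (Ft_id lam M (o c) (Hob c ltac:(lra)) i Hi).
          assert (L := Ft_lip lam M (o c) (U c) (2 * M * (1/2) ^ n) i HM
             (fun j Hj => IH c ltac:(lra) j Hj) Hi).
          rewrite Rabs_mult. rewrite (Rabs_pos_eq (t - t1)) by lra.
          assert (0 <= 2 * M * (1/2) ^ n) by (apply Rmult_le_pos; [lra| apply pow_le; lra]).
          assert (0 <= Rabs (Ft lam M (o c) i - Ft lam M (U c) i)) by apply Rabs_pos.
          apply Rle_trans with ((8 * M + 1) * (2 * M * (1 / 2) ^ n) * h).
          apply Rmult_le_compat; lra.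
          change ((1/2) ^ Datatypes.S n) with (1/2 * (1/2) ^ n).
          assert ((8 * M + 1) * (2 * M * (1 / 2) ^ n) * h = (h * (8 * M + 1)) * (2 * M * (1 / 2) ^ n)) by ring.
          rewrite H1. 
          apply Rle_trans with (1/2 * (2 * M * (1 / 2) ^ n)). apply Rmult_le_compat_r; lra. lra. }
  intros t Ht i Hi.
  cut (Rabs (o t i - U t i) <= 0). intros H. apply abs_le_e in H. unfold U in *. lra.
  apply small_zero with (2 * M). lra. intros n. apply Cl; auto.
Qed.

Lemma rc (f g : R -> R) T S : T < S -> (forall y, T <= y < S -> g y = f y) ->
  filterlim f (at_right T) (locally (f T)) -> filterlim g (at_right T) (locally (g T)).
Proof.
  intros HTS H Hf. rewrite (H T) by lra.
  apply filterlim_ext_loc with f; auto.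
  assert (He : 0 < S - T) by lra.
  exists (mkposreal _ He). intros y Hy Hy2. change (Rabs (y - T) < S - T) in Hy.
  apply Rabs_def2 in Hy. symmetry. apply H. lra.
Qed.

Theorem proposition3p3 (lam T S : R) (xi L1 L2 L3 R1 R2 R3 : R -> R) :
  0 <= lam -> T < S ->
  is_solution_on lam T S xi L1 L2 L3 R1 R2 R3 ->
  not_extendable lam T S xi L1 L2 L3 R1 R2 R3 ->
  filterlim xi (at_left S) (Rbar_locally m_infty).
Proof.
  intros Hl HTS Hsol Hne.
  destruct Hsol as [Hd0 Hc].
  assert (Hd : DerivHyp lam T S xi L1 L2 L3 R1 R2 R3) by exact Hd0.
  destruct (classic (exists A0, forall r, T < r < S -> A0 <= xi r)) as [[A0 HA]|HnA].
  2: {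
    intros P [A HP].
    destruct (classic (exists r, T < r < S /\ xi r < A)) as [[r [Hr Hxr]]|Hn].
    - assert (He : 0 < S - r) by lra.
      exists (mkposreal _ He). intros y Hy Hys. change (Rabs (y - S) < S - r) in Hy.
      apply Rabs_def2 in Hy. apply HP.
      pose proof (xi_nonincr lam T S xi L1 L2 L3 R1 R2 R3 Hl Hd r y ltac:(lra) ltac:(lra) Hys).
      lra.
    - exfalso. apply HnA. exists A. intros r Hr.
      destruct (Rlt_dec (xi r) A) as [H|H]; [exfalso; apply Hn; eauto | lra]. }
  exfalso. apply Hne.
  destruct (apriori lam T S xi L1 L2 L3 R1 R2 R3 A0 Hl HTS Hd HA) as [tb [M0 [Htb [HM0 Hbox]]]].
  set (o := fun s => pack (xi s) (L1 s) (L2 s) (L3 s) (R1 s) (R2 s) (R3 s)).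
  set (M := M0 + 1).
  assert (HM : 0 <= M) by (unfold M; lra).
  set (Bc := 4 * M ^ 2 + lam + 1).
  assert (HBc : 1 <= Bc) by (unfold Bc; assert (0 <= M ^ 2) by apply pow2_ge_0; lra).
  set (h := 1 / (2 * (8 * M + 1) + 2 * Bc)).
  assert (Hh : 0 < h) by (unfold h; apply Rdiv_lt_0_compat; lra).
  assert (HK : h * (8 * M + 1) <= 1/2).
  { unfold h. apply Rmult_le_reg_r with (2 * (2 * (8 * M + 1) + 2 * Bc)). lra.
    field_simplify; lra. }
  assert (HB2 : 2 * Bc * h <= 1).
  { unfold h. apply Rmult_le_reg_r with (2 * (8 * M + 1) + 2 * Bc). lra.
    field_simplify; lra. }
  set (t1 := Rmax tb (S - h / 2)).
  assert (Ht1a : tb <= t1) by apply Rmax_l.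
  assert (Ht1b : S - h / 2 <= t1) by apply Rmax_r.
  assert (Ht1c : t1 < S) by (unfold t1, Rmax; destruct Rle_dec; lra).
  set (u0 := o t1).
  set (U := uu lam M u0 t1 h).
  assert (HUb : forall r, inbox M (U r)).
  { intros r i Hi. pose proof (uu_u0 lam M u0 t1 h Hl HM ltac:(lra) HK i r Hi) as H1.
    fold Bc in H1. fold U in H1.
    pose proof (Hbox t1 ltac:(lra) i Hi) as H2. fold o in H2. fold u0 in H2.
    apply abs_le_e in H1, H2. change (- M0 <= u0 i <= M0) in H2. apply le_abs. unfold M. lra. }
  assert (Hod : forall r, T < r < S -> forall i, (i < 7)%nat -> derivable_pt_lim (fun s => o s i) r (F lam (o r) i)) by exact (o_deriv lam T S xi L1 L2 L3 R1 R2 R3 Hd).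
  assert (Huniq := unique lam M u0 t1 h T S o Hl HM Hh HK ltac:(lra) ltac:(lra) Hod
    ltac:(intros r Hr i Hi; eapply Rle_trans; [exact (Hbox r ltac:(lra) i Hi) | unfold M; lra])
    ltac:(intros; reflexivity) HUb).
  fold U in Huniq.
  set (t2 := (t1 + S) / 2).
  set (W := fun s => if Rlt_dec s t2 then o s else U s).
  assert (HWo : forall s, T <= s < S -> forall i, (i < 7)%nat -> W s i = o s i).
  { intros s Hs i Hi. unfold W. destruct (Rlt_dec s t2). reflexivity.
    symmetry. apply Huniq; auto. unfold t2 in *. lra. }
  assert (HWU : forall s, t2 <= s -> W s = U s).
  { intros s Hs. unfold W. destruct (Rlt_dec s t2). lra. reflexivity. }
  assert (HWd : forall r, T < r < t1 + h -> forall i, (i < 7)%nat ->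
     derivable_pt_lim (fun s => W s i) r (F lam (W r) i)).
  { intros r Hr i Hi. destruct (Rlt_dec r S) as [HrS|HrS].
    - rewrite (F_ext lam (W r) (o r) i (HWo r ltac:(lra))).
      apply is_derive_Reals. apply is_derive_ext_loc with (f := fun s => o s i).
      + assert (He : 0 < Rmin (r - T) (S - r)) by (apply Rmin_pos; lra).
        exists (mkposreal _ He). intros y Hy. change (Rabs (y - r) < Rmin (r - T) (S - r)) in Hy.
        pose proof (Rmin_l (r - T) (S - r)). pose proof (Rmin_r (r - T) (S - r)).
        apply Rabs_def2 in Hy. symmetry. apply HWo; auto. lra.
      + apply is_derive_Reals. apply Hod; auto. lra.
    - assert (Hr2 : t2 < r) by (unfold t2; lra).
      rewrite (HWU r ltac:(lra)). rewrite <- (Ft_id lam M (U r) (HUb r) i Hi).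
      apply is_derive_Reals. apply is_derive_ext_loc with (f := fun s => U s i).
      + assert (He : 0 < r - t2) by lra.
        exists (mkposreal _ He). intros y Hy. change (Rabs (y - r) < r - t2) in Hy.
        apply Rabs_def2 in Hy. rewrite HWU by lra. reflexivity.
      + apply is_derive_Reals. apply uu_deriv; auto. lra. lra. }
  destruct Hc as [C0 [C1 [C2 [C3 [C4 [C5 C6]]]]]].
  exists (t1 + h), (fun s => W s 0%nat), (fun s => W s 1%nat), (fun s => W s 2%nat),
    (fun s => W s 3%nat), (fun s => W s 4%nat), (fun s => W s 5%nat), (fun s => W s 6%nat).
  split; [lra|]. split.
  - split.
    + intros r Hr. pose proof (HWd r Hr) as D.
      split; [exact (D 0%nat ltac:(lia))|].
      split; [exact (D 1%nat ltac:(lia))|].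
      split; [exact (D 2%nat ltac:(lia))|].
      split; [exact (D 3%nat ltac:(lia))|].
      split; [exact (D 4%nat ltac:(lia))|].
      split; [exact (D 5%nat ltac:(lia))|].
      exact (D 6%nat ltac:(lia)).
    + split; [apply (rc xi _ T S HTS (fun y Hy => HWo y Hy 0%nat ltac:(lia)) C0)|].
      split; [apply (rc L1 _ T S HTS (fun y Hy => HWo y Hy 1%nat ltac:(lia)) C1)|].
      split; [apply (rc L2 _ T S HTS (fun y Hy => HWo y Hy 2%nat ltac:(lia)) C2)|].
      split; [apply (rc L3 _ T S HTS (fun y Hy => HWo y Hy 3%nat ltac:(lia)) C3)|].
      split; [apply (rc R1 _ T S HTS (fun y Hy => HWo y Hy 4%nat ltac:(lia)) C4)|].
      split; [apply (rc R2 _ T S HTS (fun y Hy => HWo y Hy 5%nat ltac:(lia)) C5)|].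
      apply (rc R3 _ T S HTS (fun y Hy => HWo y Hy 6%nat ltac:(lia)) C6).
  - intros r Hr.
    split; [exact (HWo r Hr 0%nat ltac:(lia))|].
    split; [exact (HWo r Hr 1%nat ltac:(lia))|].
    split; [exact (HWo r Hr 2%nat ltac:(lia))|].
    split; [exact (HWo r Hr 3%nat ltac:(lia))|].
    split; [exact (HWo r Hr 4%nat ltac:(lia))|].
    split; [exact (HWo r Hr 5%nat ltac:(lia))|].
    exact (HWo r Hr 6%nat ltac:(lia)).
Qed.
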